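(* For any $v_{t-1},v_t,m_{t-1},m_t\in[0,1]$, \[ |m_t-m_{t-1}|\le 2\sup_{b\in[0,1]}\left|r(b;v_t,m_t)-r(b;v_{t-1},m_{t-1})\right|, \] where $r(b;v,m)\coloneqq (v-b)\cdot\mathbbm{1}(b\ge m)$.
   Context: $\mathbbm{1}(\cdot)$ denotes the indicator function. $r(b;v,m)$ is the reward in a first-price auction of a bidder with value $v$ who bids $b$ when the highest competing bid is $m$. *)

(* Defs.v *)
From HB Require Import structures.
From mathcomp Require Import all_boot all_order all_algebra.
From mathcomp Require Import all_classical all_reals.
Set Implicit Arguments. Unset Strict Implicit. Unset Printing Implicit Defensive.
Import Order.TTheory GRing.Theory Num.Theory.
Local Open Scope ring_scope.

Definition reward (R : realType) (b v m : R) : R := (v - b) * ((m <= b)%R)%:R.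

(* Main.v *)
Require Import Defs.
From HB Require Import structures.
From mathcomp Require Import all_boot all_order all_algebra.
From mathcomp Require Import all_classical all_reals.
From mathcomp Require Import lra.
Import Order.TTheory GRing.Theory Num.Theory.
Local Open Scope classical_set_scope.
Local Open Scope ring_scope.

Lemma key (R : realType) (v m1 m2 S : R) :
  0 <= m1 -> m1 < m2 -> m2 <= 1 ->
  (forall b, m1 <= b -> b < m2 -> `|v - b| <= S) ->
  m2 - m1 <= 2 * S.
Proof.
move=> h0 h12 h2 H.
have H1 := H m1 (lexx _) h12.
have [v1 v2] : v - m1 <= S /\ - (v - m1) <= S by split; [apply: le_trans H1; apply: ler_norm | apply: le_trans H1; rewrite -normrN; apply: ler_norm].
case: (ltP (v + S) m2) => hc; last by lra.
pose b := Num.max m1 ((v + S + m2) / 2).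
have hb1 : m1 <= b by rewrite /b le_max lexx.
have hb2 : b < m2 by rewrite /b gt_max h12 /=; lra.
have hb3 : (v + S + m2) / 2 <= b by rewrite /b le_max lexx orbT.
have := H b hb1 hb2.
rewrite -normrN => hh.
have : b - v <= S by apply: le_trans hh; rewrite opprB; apply: ler_norm.
lra.
Qed.

Theorem proposition1 (R : realType) (v_prev v_t m_prev m_t : R) :
  v_prev \in `[0, 1] -> v_t \in `[0, 1] ->
  m_prev \in `[0, 1] -> m_t \in `[0, 1] ->
  `|m_t - m_prev| <=
    2 * sup [set `|reward b v_t m_t - reward b v_prev m_prev| | b in [set b : R | b \in `[0, 1]]].
Proof.
rewrite !in_itv /= => /andP[a1 a2] /andP[b1 b2] /andP[c1 c2] /andP[d1 d2].
set E := [set _ | _ in _].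
have hub : has_ubound E.
  exists 2 => x [b /=]; rewrite in_itv /= => /andP[e1 e2] <-.
  rewrite /reward; apply: le_trans (ler_normB _ _) _.
  have hn : forall v m : R, 0 <= v <= 1 -> `|(v - b) * ((m <= b)%R)%:R| <= 1.
    move=> v m /andP[f1 f2]; case: (m <= b) => /=; rewrite ?mulr1 ?mulr0 ?normr0 //.
    by rewrite ler_norml; apply/andP; split; lra.
  have := hn v_t m_t; have := hn v_prev m_prev.
  rewrite a1 a2 b1 b2 /= => h1 h2. have := h1 isT; have := h2 isT. move=> x1 x2; apply: le_trans (lerD x1 x2) _; rewrite (_ : 2 = 1 + 1 :> R) //; lra.
have inE : forall b, 0 <= b <= 1 -> `|reward b v_t m_t - reward b v_prev m_prev| <= sup E.
  by move=> b hb; apply: ub_le_sup => //; exists b => //=; rewrite in_itv.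
have S0 : 0 <= sup E by apply: le_trans (inE 0 _) => //; rewrite lexx ler01.
case: (ltgtP m_prev m_t) => hm.
- rewrite gtr0_norm ?subr_gt0 //; apply: (@key _ v_prev) => // b hb1 hb2.
  have := inE b; rewrite /reward.
  have -> : (m_t <= b) = false by apply/negbTE; rewrite -ltNge.
  rewrite hb1 /= mulr0 mulr1 sub0r normrN; apply; apply/andP; split; lra.
- rewrite ltr0_norm ?subr_lt0 // opprB; apply: (@key _ v_t) => // b hb1 hb2.
  have := inE b; rewrite /reward.
  have -> : (m_prev <= b) = false by apply/negbTE; rewrite -ltNge.
  rewrite hb1 /= mulr0 mulr1 subr0; apply; apply/andP; split; lra.
- by rewrite hm subrr normr0 mulr_ge0.
Qed.
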